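(* Let $C>1$ and let $P$ be a probability measure on $[0,\infty)$. Consider the equation $G_{P,C}(\mu)=0$, $\mu\ge0$. (1) If $\mathbb{P}_{t\sim P}[t=0]<1-\frac1C$, the equation has exactly two solutions, namely $0$ and $\mu_{P,C}>0$. (2) If $\mathbb{P}_{t\sim P}[t=0]=1-\frac1C$, then $G_{P,C}(\mu)=0$ for all $0\le\mu\le\frac1Cm_P$, and $\mu_{P,C}=\frac1Cm_P$. (3) If $\mathbb{P}_{t\sim P}[t=0]>1-\frac1C$, the only solution is $0$, so $\mu_{P,C}=0$.
   Context: For $\mu\ge0$ define $G_{P,C}(\mu):=\mathbb{E}_{t\sim P}[\min\{t,C\mu\}]-\mu$. The $C$-clipped mean $\mu_{P,C}$ is the largest $\mu\ge0$ with $G_{P,C}(\mu)=0$. The $\frac1C$-median is $m_P:=\sup\{M\ge0:\mathbb{P}_{t\sim P}[t\ge M]\ge\frac1C\}$. *)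

(* Defs.v *)
From HB Require Import structures.
From mathcomp Require Import all_boot all_order all_algebra.
From mathcomp Require Import all_classical all_reals all_analysis.
Set Implicit Arguments. Unset Strict Implicit. Unset Printing Implicit Defensive.
Import Order.TTheory GRing.Theory Num.Theory.
Local Open Scope classical_set_scope.
Local Open Scope ring_scope.

Definition supported_nonneg (R : realType) (P : probability R R) : Prop :=
  P [set t : R | t < 0] = 0%E.

Definition G_clip (R : realType) (P : probability R R) (C mu : R) : \bar R :=
  ((\int[P]_(t in setT) (Order.min t (C * mu))%:E) - mu%:E)%E.

Definition is_clipped_mean (R : realType) (P : probability R R) (C m : R) : Prop :=
  0 <= m /\ G_clip P C m = 0%E /\
  (forall mu : R, 0 <= mu -> G_clip P C mu = 0%E -> mu <= m).

Definition median_C (R : realType) (P : probability R R) (C : R) : R :=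
  sup [set M : R | 0 <= M /\ (lee (C^-1)%:E (P [set t : R | M <= t]))].

(* Main.v *)
Require Import Defs.
From HB Require Import structures.
From mathcomp Require Import all_boot all_order all_algebra.
From mathcomp Require Import all_classical all_reals all_analysis.
From mathcomp Require Import measurable_realfun.
From mathcomp Require Import ring lra.
Import Order.TTheory GRing.Theory Num.Theory.
Local Open Scope classical_set_scope.
Local Open Scope ring_scope.
Set Implicit Arguments. Unset Strict Implicit.


Section S.
Context (R : realType) (P : probability R R).

Lemma mge x : measurable [set t : R | x <= t].
Proof.
have -> : [set t : R | x <= t] = `[x, +oo[%classic.
  by apply/seteqP; split => t /=; rewrite in_itv /= andbT.
exact: measurable_itv.
Qed.
Lemma mgt x : measurable [set t : R | x < t].
Proof.
have -> : [set t : R | x < t] = `]x, +oo[%classic.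
  by apply/seteqP; split => t /=; rewrite in_itv /= andbT.
exact: measurable_itv.
Qed.
Lemma mlt x : measurable [set t : R | t < x].
Proof.
have -> : [set t : R | t < x] = `]-oo, x[%classic.
  by apply/seteqP; split => t /=; rewrite in_itv /=.
exact: measurable_itv.
Qed.

Definition pr (A : set R) : R := fine (P A).
Lemma prE A : measurable A -> P A = (pr A)%:E.
Proof. by move=> mA; rewrite /pr fineK// fin_num_measure. Qed.
Lemma pr_ge0 A : 0 <= pr A.
Proof. by rewrite /pr fine_ge0. Qed.
Lemma pr_le1 A : measurable A -> pr A <= 1.
Proof. by move=> mA; rewrite -lee_fin -prE// probability_le1. Qed.
Lemma pr_le A B : measurable A -> measurable B -> A `<=` B -> pr A <= pr B.
Proof. by move=> mA mB AB; rewrite -lee_fin -!prE// le_measure// inE. Qed.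

Definition clamp (x t : R) : R := Order.min (Order.max t 0) x.
Lemma mclamp x : measurable_fun [set: R] (EFin \o clamp x).
Proof.
apply/measurable_EFinP; apply: measurable_minr => //.
by apply: measurable_maxr.
Qed.

Definition I (x : R) : \bar R := \int[P]_(t in setT) (clamp x t)%:E.
Definition h x := fine (I x).

Lemma I_ae x : 0 <= x -> supported_nonneg P ->
  (\int[P]_(t in setT) (Order.min t x)%:E = I x)%E.
Proof.
move=> x0 sP; apply: ae_eq_integral => //.
- apply/measurable_EFinP; exact: measurable_minr.
- exact: mclamp.
exists [set t : R | t < 0]; split => //; first exact: mlt.
move=> t /= H; rewrite ltNge; apply/negP => t0; apply: H => _.
by rewrite /clamp (max_idPl t0).
Qed.
End S.

Unset Implicit Arguments. Set Strict Implicit.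


Section S2.
Context (R : realType) (P : probability R R).

Lemma clamp_cases (x t : R) : 0 <= x ->
  [\/ t <= 0 /\ clamp x t = 0, (0 <= t <= x) /\ clamp x t = t |
      x <= t /\ clamp x t = x].
Proof.
move=> x0; rewrite /clamp /Order.max /Order.min.
case: (ltP t 0) => t0.
  case: (ltP 0 x) => x0'; first by apply: Or31; split=> //; lra.
  by apply: Or31; split; [lra|apply/le_anti; rewrite x0' x0].
case: (ltP t x) => tx; [apply: Or32; split => //; lra|].
by apply: Or33; split.
Qed.

Lemma clamp_ge0 (x t : R) : 0 <= x -> 0 <= clamp x t.
Proof. by move=> x0; case: (clamp_cases x t x0) => -[? ->]; lra. Qed.

Lemma Isplit (x y : R) : 0 <= x <= y ->
  (I P y = I P x + \int[P]_(t in setT) (clamp y t - clamp x t)%:E)%E.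
Proof.
move=> /andP[x0 xy]; rewrite /I -ge0_integralD//.
- by apply: eq_integral => t _; rewrite -EFinD; congr EFin; ring.
- by move=> t _; rewrite lee_fin clamp_ge0.
- exact: mclamp.
- move=> t _; rewrite lee_fin subr_ge0.
  case: (clamp_cases x t x0) => -[? ->]; case: (clamp_cases y t (le_trans x0 xy)) => -[? ->]; lra.
- apply/measurable_EFinP; apply: measurable_funB; apply/measurable_EFinP; exact: mclamp.
Qed.

Lemma in_gtE (x t : R) : (t \in [set t : R | x < t]) = (x < t).
Proof. by apply/idP/idP => [/set_mem|/mem_set]. Qed.
Lemma in_geE (x t : R) : (t \in [set t : R | x <= t]) = (x <= t).
Proof. by apply/idP/idP => [/set_mem|/mem_set]. Qed.

Lemma int_indic (A : set R) (k : R) : measurable A -> 0 <= k ->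
  (\int[P]_(t in setT) (k * \1_A t)%:E = (k * pr P A)%:E)%E.
Proof.
move=> mA k0.
under eq_integral do rewrite EFinM.
rewrite ge0_integralZl_EFin//.
- by rewrite integral_indic// setIT EFinM /pr fineK// fin_num_measure.
all: try by move=> t _; rewrite lee_fin.
all: try by apply/measurable_EFinP; exact: measurable_indic.
Qed.

Lemma mdiff (x y : R) : measurable_fun [set: R] (EFin \o (fun t => clamp y t - clamp x t)).
Proof. apply/measurable_EFinP; apply: measurable_funB; apply/measurable_EFinP; exact: mclamp. Qed.

Lemma diff_lb (x y : R) : 0 <= x <= y ->
  (((y - x) * pr P [set t | y <= t])%:E <= \int[P]_(t in setT) (clamp y t - clamp x t)%:E)%E.
Proof.
move=> /andP[x0 xy]; rewrite -int_indic//; last by rewrite subr_ge0.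
  apply: ge0_le_integral => //.
  - by move=> t _; rewrite lee_fin mulr_ge0 // ?subr_ge0// /indic; case: (_ \in _).
  - by apply/measurable_EFinP; apply: measurable_funM => //; exact: measurable_indic (mge _).
  - exact: mdiff.
  move=> t _; rewrite lee_fin /indic.
  case: (clamp_cases x t x0) => -[? ->]; case: (clamp_cases y t (le_trans x0 xy)) => -[? ->];
    rewrite in_geE; case: (leP y t) => H /=; rewrite ?mulr1 ?mulr0; lra.
exact: mge.
Qed.

Lemma diff_ub (x y : R) : 0 <= x <= y ->
  (\int[P]_(t in setT) (clamp y t - clamp x t)%:E <= ((y - x) * pr P [set t | x < t])%:E)%E.
Proof.
move=> /andP[x0 xy]; rewrite -int_indic//; last by rewrite subr_ge0.
  apply: ge0_le_integral => //.
  - move=> t _; rewrite lee_fin subr_ge0.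
    case: (clamp_cases x t x0) => -[? ->]; case: (clamp_cases y t (le_trans x0 xy)) => -[? ->]; lra.
  - exact: mdiff.
  - by apply/measurable_EFinP; apply: measurable_funM => //; exact: measurable_indic (mgt _).
  move=> t _; rewrite lee_fin /indic.
  case: (clamp_cases x t x0) => -[? ->]; case: (clamp_cases y t (le_trans x0 xy)) => -[? ->];
    rewrite in_gtE; case: (ltP x t) => H /=; rewrite ?mulr1 ?mulr0; lra.
exact: mgt.
Qed.

Lemma I0 : I P 0 = 0%E.
Proof.
rewrite /I (_ : (fun t => (clamp 0 t)%:E) = cst 0%E) ?integral0//.
apply/funext => t; congr EFin; apply/le_anti/andP; rewrite clamp_ge0//.
case: (clamp_cases 0 t (lexx 0)) => -[? ->] //; lra.
Qed.

Lemma I_fin (y : R) : 0 <= y -> I P y = (h P y)%:E.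
Proof.
move=> y0; rewrite /h fineK//.
have := @Isplit 0 y; rewrite lexx y0 /= => /(_ isT).
rewrite I0 add0e => ->.
have := @diff_lb 0 y; have := @diff_ub 0 y.
rewrite lexx y0 /= => /(_ isT) u /(_ isT) l.
by rewrite fin_numElt (lt_le_trans _ l) ?ltNyr// (le_lt_trans u) ?ltry.
Qed.

Definition pge (x : R) := pr P [set t | x <= t].
Definition pgt (x : R) := pr P [set t | x < t].

Lemma h_bounds (x y : R) : 0 <= x <= y ->
  (y - x) * pge y <= h P y - h P x <= (y - x) * pgt x.
Proof.
move=> /[dup] xy /andP[x0 x0y].
have y0 := le_trans x0 x0y.
have := @Isplit x y xy; have l := @diff_lb x y xy; have u := @diff_ub x y xy.
rewrite !I_fin// => E.
have Ef : (\int[P]_(t in setT) (clamp y t - clamp x t)%:E)%E = (h P y - h P x)%:E.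
  by rewrite EFinB E addeAC subee ?add0e.
by rewrite -!lee_fin -Ef l u.
Qed.

Lemma Gh (C mu : R) : 0 <= C * mu -> supported_nonneg P ->
  G_clip P C mu = (h P (C * mu) - mu)%:E.
Proof. by move=> H sP; rewrite /G_clip I_ae// I_fin// EFinB. Qed.
End S2.
Arguments pgt {R} P x. Arguments pge {R} P x. Arguments h_bounds {R} P x y. Arguments Gh {R} P C mu.



Section S3.
Context (R : realType) (P : probability R R).

Lemma mu_incr (F : (set R)^nat) (a : \bar R) : (forall n, measurable (F n)) ->
  nondecreasing_seq F -> (a < P (\bigcup_n F n))%E -> exists n, (a < P (F n))%E.
Proof.
move=> mF ndF aU.
have h1 := nondecreasing_cvg_mu (R:=R) (mu:=P) mF (bigcupT_measurable _ mF) ndF.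
have ndP : nondecreasing_seq (P \o F).
  by move=> n m nm; rewrite /= le_measure// ?inE//; rewrite -subsetEset; exact: ndF.
have h2 := ereal_nondecreasing_cvgn ndP.
have E : P (\bigcup_n F n) = ereal_sup (range (P \o F)) by apply: (cvg_unique _ h1 h2)...
rewrite E in aU; have [y [n _ <-] ay] := ereal_sup_gt aU.
by exists n.
Qed.

Lemma pgt0E : supported_nonneg P -> pgt P 0 = 1 - pr P [set 0].
Proof.
move=> sP; rewrite /pgt.
have -> : [set t : R | 0 < t] = ~` ([set t | t < 0] `|` [set 0]).
  apply/seteqP; split => t /=.
    by move=> t0 [/=|/= t00]; [rewrite ltNge (ltW t0)|rewrite t00 ltxx in t0].
  move=> H; rewrite ltNge le_eqVlt; apply/negP => /orP[/eqP|] H'.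
    by apply: H; right.
  by apply: H; left.
have mA := mlt (0:R).
have mB : measurable [set (0:R)] by [].
have dAB : [set t : R | t < 0] `&` [set 0] = set0.
  by apply/seteqP; split => t //= [t0 t00]; rewrite t00 ltxx in t0.
have E1 : P ([set t : R | t < 0] `|` [set 0]) = P [set 0].
  by transitivity (P [set t : R | (t < 0)%R] + P [set 0%R])%E; [exact: measureU|rewrite sP add0e].
have E2 : P (~` ([set t : R | t < 0] `|` [set 0])) = (1 - pr P [set 0])%:E.
  transitivity (1 - P ([set t : R | (t < 0)%R] `|` [set 0%R]))%E.
    by apply: probability_setC; exact: measurableU.
  by rewrite E1 EFinB /pr fineK// fin_num_measure.
by rewrite /pr E2.
Qed.


Lemma prC (A : set R) : measurable A -> pr P (~` A) = 1 - pr P A.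
Proof.
move=> mA; have E2 : P (~` A) = (1 - pr P A)%:E.
  transitivity (1 - P A)%E; first exact: probability_setC.
  by rewrite EFinB /pr fineK// fin_num_measure.
by rewrite /pr E2.
Qed.

Lemma pge_small (e : R) : 0 < e -> exists M : R, 0 <= M /\ pge P M < e.
Proof.
move=> e0.
pose F := fun n : nat => [set t : R | t < n%:R].
have mF : forall n, measurable (F n) by move=> n; exact: mlt.
have ndF : nondecreasing_seq F.
  move=> n m nm; rewrite subsetEset /F => t /= tn.
  by rewrite (lt_le_trans tn)// ler_nat.
have U : \bigcup_n F n = setT.
  apply/seteqP; split => // t _; exists (Num.truncn t).+1 => //=.
  exact: truncnS_gt.
have : ((1 - e)%:E < P (\bigcup_n F n))%E.
  by rewrite U probability_setT lte_fin; lra.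
move=> /(mu_incr _ _ mF ndF) [n].
rewrite (prE P (mF n)) lte_fin => H.
exists n%:R; split => //; rewrite /pge.
have -> : [set t : R | n%:R <= t] = ~` F n.
  by apply/seteqP; split => t /=; rewrite leNgt => /negP.
rewrite prC//; lra.
Qed.

Lemma pge_near (c : R) : c < pgt P 0 -> exists x : R, 0 < x /\ c < pge P x.
Proof.
move=> c0.
pose F := fun n : nat => [set t : R | (n.+1%:R)^-1 <= t].
have mF : forall n, measurable (F n) by move=> n; exact: mge.
have ndF : nondecreasing_seq F.
  move=> n m nm; rewrite subsetEset /F => t /= tn.
  by rewrite (le_trans _ tn)// lef_pV2 ?posrE// ler_nat.
have U : \bigcup_n F n = [set t | 0 < t].
  apply/seteqP; split => t /=.
    by move=> [n _ /=]; apply: lt_le_trans; rewrite invr_gt0.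
  move=> t0; exists (Num.truncn t^-1) => //=.
  rewrite /F /= -[leRHS]invrK lef_pV2 ?posrE ?invr_gt0//.
  exact/ltW/truncnS_gt.
have : (c%:E < P (\bigcup_n F n))%E.
  by rewrite U (prE P (mgt 0)) lte_fin.
move=> /(mu_incr _ _ mF ndF) [n].
rewrite (prE P (mF n)) lte_fin => H.
by exists (n.+1%:R)^-1; split => //; rewrite invr_gt0.
Qed.
End S3.
Arguments pgt0E {R} P.
Arguments prC {R} P.
Arguments pge_small {R} P.
Arguments pge_near {R} P.
Arguments mu_incr {R} P.



Section S4.
Context (R : realType) (P : probability R R).

Lemma h0 : h P 0 = 0.
Proof. by rewrite /h I0. Qed.
Lemma pgt_le_pge (x : R) : pgt P x <= pge P x.
Proof. by apply: pr_le; [exact: mgt|exact: mge|move=> t /= /ltW]. Qed.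
Lemma pge_le_pgt (x y : R) : x < y -> pge P y <= pgt P x.
Proof. by move=> xy; apply: pr_le; [exact: mge|exact: mgt|move=> t /=; apply: lt_le_trans]. Qed.
Lemma pge_anti (x y : R) : x <= y -> pge P y <= pge P x.
Proof. by move=> xy; apply: pr_le; [exact: mge|exact: mge|move=> t /=; apply: le_trans]. Qed.
Lemma pgt_anti (x y : R) : x <= y -> pgt P y <= pgt P x.
Proof. by move=> xy; apply: pr_le; [exact: mgt|exact: mgt|move=> t /=; apply: le_lt_trans]. Qed.
Lemma pgt_le1 (x : R) : pgt P x <= 1.
Proof. exact: pr_le1 (mgt _). Qed.
Lemma pge_le1 (x : R) : pge P x <= 1.
Proof. exact: pr_le1 (mge _). Qed.
Lemma pge_ge0 (x : R) : 0 <= pge P x.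
Proof. exact: pr_ge0. Qed.
Lemma pgt_ge0 (x : R) : 0 <= pgt P x.
Proof. exact: pr_ge0. Qed.

Lemma hb_lo (x y : R) : 0 <= x <= y -> (y - x) * pge P y <= h P y - h P x.
Proof. by move=> xy; case/andP: (h_bounds P _ _ xy). Qed.
Lemma hb_up (x y : R) : 0 <= x <= y -> h P y - h P x <= (y - x) * pgt P x.
Proof. by move=> xy; case/andP: (h_bounds P _ _ xy). Qed.

Lemma h_lo (y : R) : 0 <= y -> y * pge P y <= h P y.
Proof. by move=> y0; have := @hb_lo 0 y; rewrite lexx y0 h0 !subr0; apply. Qed.
Lemma h_up (y : R) : 0 <= y -> h P y <= y * pgt P 0.
Proof. by move=> y0; have := @hb_up 0 y; rewrite lexx y0 h0 !subr0; apply. Qed.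
Lemma h_ge0 (y : R) : 0 <= y -> 0 <= h P y.
Proof. by move=> y0; apply: (le_trans _ (h_lo _ y0)); rewrite mulr_ge0// pge_ge0. Qed.

Lemma h_lip (a b : R) : `|h P (Num.max a 0) - h P (Num.max b 0)| <= `|a - b|.
Proof.
wlog ab : a b / b <= a.
  move=> H; case: (leP b a) => [|/ltW] ba; first exact: H.
  by rewrite distrC (distrC a); exact: H.
have m0 : 0 <= Num.max b 0 <= Num.max a 0.
  rewrite /Num.max; case: (ltP a 0); case: (ltP b 0); lra.
have := hb_lo _ _ m0; have := hb_up _ _ m0.
have := pgt_le1 (Num.max b 0); have := pge_ge0 (Num.max a 0).
have : Num.max a 0 - Num.max b 0 <= a - b.
  rewrite /Num.max; case: (ltP a 0); case: (ltP b 0); lra.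
move: m0 => /andP[m0 m1].
set u := Num.max a 0; set v := Num.max b 0.
move=> H1 H2 H3 H4 H5.
have H6 : (u - v) * pge P u >= 0 by rewrite mulr_ge0// subr_ge0.
have H7 : (u - v) * pgt P v <= u - v by rewrite ler_piMr// subr_ge0.
have -> : `|h P u - h P v| = h P u - h P v by apply: ger0_norm; lra.
have -> : `|a - b| = a - b by apply: ger0_norm; lra.
lra.
Qed.
End S4.
Arguments h0 {R} P.
Arguments pgt_le_pge {R} P.
Arguments pge_le_pgt {R} P.
Arguments pge_anti {R} P.
Arguments pgt_anti {R} P.
Arguments pgt_le1 {R} P.
Arguments pge_le1 {R} P.
Arguments pge_ge0 {R} P.
Arguments pgt_ge0 {R} P.
Arguments hb_lo {R} P.
Arguments hb_up {R} P.
Arguments h_lo {R} P.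
Arguments h_up {R} P.
Arguments h_ge0 {R} P.
Arguments h_lip {R} P.

Import numFieldNormedType.Exports.


Lemma lip_cont (R : realType) (f : R -> R) (L : R) : 0 < L ->
  (forall x y, `|f x - f y| <= L * `|x - y|) -> continuous f.
Proof.
move=> L0 Lf x; apply/cvgrPdist_lt => e e0.
have := near_ball x (e / L) (divr_gt0 e0 L0); apply: filterS => y.
rewrite /ball /= => xy.
apply: (le_lt_trans (Lf x y)).
by rewrite -ltr_pdivlMl// mulrC.
Qed.

Section S5.
Context (R : realType) (P : probability R R) (C : R).
Hypothesis C1 : 1 < C.
Hypothesis sP : supported_nonneg P.

Let C0 : 0 < C. Proof. exact: lt_trans ltr01 C1. Qed.
Let CC : C * C^-1 = 1. Proof. by rewrite divff// gt_eqF. Qed.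

Definition g (mu : R) := h P (C * mu) - mu.

Lemma gE (mu : R) : 0 <= mu -> G_clip P C mu = (g mu)%:E.
Proof. by move=> mu0; rewrite (Gh P C mu)// mulr_ge0// ltW. Qed.

Lemma G0 (mu : R) : 0 <= mu -> (G_clip P C mu = 0%E <-> g mu = 0).
Proof. by move=> mu0; rewrite gE//; split => [[]|->]. Qed.

Lemma g0 : g 0 = 0.
Proof. by rewrite /g mulr0 h0 subr0. Qed.

Lemma g_lo (mu : R) : 0 <= mu -> C * mu * pge P (C * mu) - mu <= g mu.
Proof. by move=> mu0; rewrite /g lerD2r h_lo// mulr_ge0// ltW. Qed.

Lemma g_up (mu : R) : 0 <= mu -> g mu <= C * mu * pgt P 0 - mu.
Proof. by move=> mu0; rewrite /g lerD2r h_up// mulr_ge0// ltW. Qed.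

Lemma case3 : pgt P 0 < C^-1 -> forall mu, 0 < mu -> g mu < 0.
Proof.
move=> p mu mu0; apply: (le_lt_trans (g_up _ (ltW mu0))).
have : C * mu * pgt P 0 < C * mu * C^-1 by rewrite ltr_pM2l// mulr_gt0.
have -> : C * mu * C^-1 = mu by rewrite mulrAC CC mul1r.
lra.
Qed.

Definition Emed := [set M : R | 0 <= M /\ lee (C^-1)%:E (P [set t : R | M <= t])].

Lemma EmedE (M : R) : Emed M <-> 0 <= M /\ C^-1 <= pge P M.
Proof. by rewrite /Emed /= (prE P (mge M)) lee_fin. Qed.

Section case2.
Hypothesis p2 : pgt P 0 = C^-1.

Lemma Emed0 : Emed 0.
Proof. by apply/EmedE; split => //; rewrite -p2 pgt_le_pge. Qed.

Lemma Emed_sup : has_sup Emed.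
Proof.
have [M0 [M00 HM0]] := pge_small P (C^-1) (ltac:(by rewrite invr_gt0) : 0 < C^-1).
split; first by exists 0; exact: Emed0.
exists M0 => M /EmedE [M0' HM]; rewrite leNgt; apply/negP => H.
have := pge_anti P M0 M (ltW H); lra.
Qed.

Let m := sup Emed.

Lemma m_ge0 : 0 <= m.
Proof. exact: (sup_upper_bound Emed_sup Emed0). Qed.

Lemma zero_below_strict (mu : R) : 0 < mu -> C * mu < m -> g mu = 0.
Proof.
move=> mu0 Cm.
have [M EM HM] := sup_adherent (ltac:(by rewrite subr_gt0) : 0 < m - C * mu) Emed_sup.
move/EmedE: EM => [M0 HM'].
have HM2 : C * mu < M by rewrite -/m in HM; lra.
have := pge_anti P _ _ (ltW HM2) => Hp.
have := g_lo _ (ltW mu0); have := g_up _ (ltW mu0).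
have : C * mu * C^-1 <= C * mu * pge P (C * mu) by rewrite ler_pM2l ?mulr_gt0//; lra.
rewrite p2 mulrAC CC mul1r => *.
apply/le_anti/andP; split; lra.
Qed.

Lemma zero_below (mu : R) : 0 <= mu -> C * mu <= m -> g mu = 0.
Proof.
move=> mu0 Cm; case: (ltP 0 mu) => mu0'; last first.
  have -> : mu = 0 by apply/le_anti/andP; split.
  exact: g0.
have gu := g_up _ mu0; rewrite p2 mulrAC CC mul1r subrr in gu.
apply/le_anti/andP; split => //; rewrite leNgt; apply/negP => gneg.
have hg := h_ge0 P (C * mu) (ltW (mulr_gt0 C0 mu0')).
move: gneg; rewrite /g => gneg.
pose nu := (h P (C * mu) + mu) / 2.
have nu0 : 0 < nu by rewrite /nu; lra.
have numu : nu < mu by rewrite /nu; lra.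
have Cnu : C * nu < m by apply: (lt_le_trans _ Cm); rewrite ltr_pM2l.
have := zero_below_strict _ nu0 Cnu; rewrite /g => gnu.
have := hb_lo P (C * nu) (C * mu).
rewrite mulr_ge0 ?(ltW nu0) ?(ltW C0)//= ler_pM2l// (ltW numu) => /(_ isT) H.
have : 0 <= (C * mu - C * nu) * pge P (C * mu).
  by rewrite mulr_ge0 ?pge_ge0// subr_ge0 ler_pM2l// ltW.
rewrite /nu in gnu H numu *; lra.
Qed.

Lemma neg_above (mu : R) : 0 <= mu -> m < C * mu -> g mu < 0.
Proof.
move=> mu0 Cm.
pose M := (m + C * mu) / 2.
have m0 := m_ge0.
have mM : m < M by rewrite /M; lra.
have MC : M < C * mu by rewrite /M; lra.
have M0 : 0 <= M by rewrite /M; lra.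
have pM : pge P M < C^-1.
  rewrite ltNge; apply/negP => H.
  have : Emed M by apply/EmedE.
  move/(sup_upper_bound Emed_sup) => H'; rewrite -/m in H'; lra.
have H1 := hb_up P M (C * mu); rewrite M0 (ltW MC) /= in H1.
have H2 := pgt_le_pge P M.
have H3 : (C * mu - M) * pgt P M <= (C * mu - M) * pge P M.
  by rewrite ler_pM2l// subr_gt0.
have H4 : (C * mu - M) * pge P M < (C * mu - M) * C^-1.
  by rewrite ltr_pM2l// subr_gt0.
have H5 := h_up P M M0; rewrite p2 in H5.
have E1 : (C * mu - M) * C^-1 = mu - M * C^-1.
  by rewrite mulrBl mulrAC CC mul1r.
rewrite /g; move: (H1 isT) => H1'; lra.
Qed.
End case2.

Section case1.
Hypothesis p1 : C^-1 < pgt P 0.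

Lemma x0_ex : exists x0 : R, 0 < x0 /\ C^-1 < pge P x0.
Proof. exact: pge_near. Qed.

Lemma g_pos (x0 mu : R) : C^-1 < pge P x0 -> 0 < mu -> C * mu <= x0 -> 0 < g mu.
Proof.
move=> Hx0 mu0 Cx.
have Cmu0 : 0 < C * mu by rewrite mulr_gt0.
have H1 := g_lo _ (ltW mu0).
have H2 := pge_anti P _ _ Cx.
have H3 : C * mu * C^-1 < C * mu * pge P (C * mu) by rewrite ltr_pM2l//; lra.
rewrite mulrAC CC mul1r in H3; lra.
Qed.

Lemma big_neg : exists b : R, 0 < b /\ g b < 0.
Proof.
have [M0 [M00 HM0]] := pge_small P (C^-1) (ltac:(by rewrite invr_gt0) : 0 < C^-1).
set q := pge P M0 in HM0.
have q0 : 0 <= q := pge_ge0 P M0.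
have Cq : C * q < 1 by rewrite -CC ltr_pM2l.
pose d := 1 - C * q.
have d0 : 0 < d by rewrite /d; lra.
have d1 : d <= 1 by rewrite /d; have := mulr_ge0 (ltW C0) q0; lra.
pose b := (M0 + 1) / d.
have bd : b * d = M0 + 1 by rewrite /b mulfVK// gt_eqF.
have bM : M0 + 1 <= b.
  by rewrite /b ler_pdivlMr// ler_piMr//; lra.
have b0 : 0 < b by lra.
have CbM : M0 <= C * b.
  have : 0 <= (C - 1) * b by apply: mulr_ge0; [rewrite subr_ge0 ltW|exact: ltW].

  rewrite mulrBl mul1r; lra.
exists b; split => //.
have H1 := hb_up P M0 (C * b); rewrite M00 CbM /= in H1; move: (H1 isT) => {}H1.
have H2 : (C * b - M0) * pgt P M0 <= (C * b - M0) * q.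
  by rewrite ler_wpM2l ?subr_ge0// pgt_le_pge.
have H3 : (C * b - M0) * q = C * b * q - M0 * q by rewrite mulrBl.
have H4 : 0 <= M0 * q by rewrite mulr_ge0.
have H5 := h_up P M0 M00.
have H6 : M0 * pgt P 0 <= M0 by rewrite ler_piMr// pgt_le1.
have E : b * d = b - C * b * q by rewrite /d mulrBr mulr1 mulrCA mulrA.
rewrite /g; lra.
Qed.

Lemma two_roots (u v : R) : 0 < u -> u < v -> g u = 0 -> g v = 0 -> False.
Proof.
move=> u0 uv gu gv.
have [x0 [x00 Hx0]] := x0_ex.
have Cu0 : 0 <= C * u by rewrite mulr_ge0// ltW.
have H1 := hb_up P (C * u) (C * v); rewrite Cu0 ler_pM2l ?(ltW uv)//= in H1.
move: (H1 isT) => {}H1; move: gu gv; rewrite /g => gu gv.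
have E1 : C * v - C * u = C * (v - u) by rewrite mulrBr.
rewrite E1 in H1.
have H2 : C^-1 <= pgt P (C * u).
  rewrite leNgt; apply/negP => H.
  have : C * (v - u) * pgt P (C * u) < C * (v - u) * C^-1.
    by rewrite ltr_pM2l// mulr_gt0// subr_gt0.
  have -> : C * (v - u) * C^-1 = v - u by rewrite mulrAC CC mul1r.
  move: (C * (v - u) * pgt P (C * u)) H1 => X H1 H4.
  move: (h P (C * v)) (h P (C * u)) gu gv H1 => A B gu gv H1.
  clear -H1 H4 gu gv; lra.
have H3 := pgt_le_pge P (C * u).
pose e := Num.min (x0 / C) (u / 2).
have e0 : 0 < e by rewrite /e lt_min divr_gt0//= divr_gt0.
have eu : e < u by rewrite /e gt_min; apply/orP; right; lra.
have Cex : C * e <= x0.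
  rewrite /e; have : Num.min (x0 / C) (u / 2) <= x0 / C by rewrite ge_min lexx.
  by rewrite -(ler_pM2l C0) mulrCA CC mulr1.
have ge := g_pos _ _ Hx0 e0 Cex; rewrite /g in ge.
clearbody e.
have H4 := hb_lo P (C * e) (C * u).
rewrite mulr_ge0 ?(ltW e0) ?(ltW C0)//= ler_pM2l// (ltW eu) in H4.
move: (H4 isT) => {}H4.
have H5 : (C * u - C * e) * C^-1 <= (C * u - C * e) * pge P (C * u).
  by rewrite ler_wpM2l ?subr_ge0 ?ler_pM2l// ?(ltW eu)//; lra.
have E2 : (C * u - C * e) * C^-1 = u - e by rewrite mulrBl; congr (_ - _); rewrite mulrAC CC mul1r.
rewrite E2 in H5.
move: (C * u - C * e) H4 H5 => Y H4 H5.
move: (Y * pge P (C * u)) H4 H5 => Z H4 H5.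
move: (h P (C * e)) ge H4 => W ge H4.
move: (h P (C * u)) gu H4 => V gu H4.
clear -ge H4 H5 gu; lra.
Qed.

Definition gc (mu : R) := h P (Num.max (C * mu) 0) - mu.

Lemma gc_cont : continuous gc.
Proof.
apply: (@lip_cont _ _ (C + 1)); first by rewrite addr_gt0.
move=> x y; rewrite /gc.
have H := h_lip P (C * x) (C * y).
have -> : h P (Num.max (C * x) 0) - x - (h P (Num.max (C * y) 0) - y) =
  (h P (Num.max (C * x) 0) - h P (Num.max (C * y) 0)) - (x - y) by ring.
apply: (le_trans (ler_normB _ _)).
have E : C * x - C * y = C * (x - y) by rewrite mulrBr.
rewrite E normrM gtr0_norm// in H.
lra.
Qed.

Lemma gcE (mu : R) : 0 <= mu -> gc mu = g mu.
Proof.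
by move=> mu0; rewrite /gc /g (_ : Num.max (C * mu) 0 = C * mu)// max_l// mulr_ge0// ltW.
Qed.

Lemma root_ex : exists c : R, 0 < c /\ g c = 0.
Proof.
have [x0 [x00 Hx0]] := x0_ex.
have [b [b0 gb]] := big_neg.
pose a := x0 / C.
have a0 : 0 < a by rewrite divr_gt0.
have Ca : C * a <= x0 by rewrite /a mulrCA CC mulr1.
have ga := g_pos _ _ Hx0 a0 Ca.
have ab : a <= b.
  rewrite leNgt; apply/negP => ba.
  have : C * b <= x0 by apply: le_trans Ca; rewrite ler_pM2l// ltW.
  move/(g_pos _ _ Hx0 b0); lra.
have := @IVT R gc a b 0 ab.
have cw : {within `[a, b], continuous gc} by apply: continuous_subspaceT; exact: gc_cont.
rewrite !gcE ?(ltW a0) ?(ltW b0)// => /(_ cw).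
rewrite ge_min le_max (ltW gb) (ltW ga) orbT /= => /(_ isT) [c].
rewrite in_itv /= => /andP[ac cb] gcc.
exists c; split; first by lra.
by rewrite -gcE//; lra.
Qed.
End case1.
End S5.
Arguments G0 {R P C}.
Arguments root_ex {R P C}.
Arguments two_roots {R P C}.
Arguments zero_below {R P C}.
Arguments neg_above {R P C}.
Arguments case3 {R P C}.
Arguments m_ge0 {R P C}.
Arguments Emed_sup {R P C}.
Arguments gE {R P C}.



Theorem mainTheorem16 (R : realType) (C : R) (P : probability R R) :
  1 < C -> supported_nonneg P ->
  (lte (P [set (0:R)]) (1 - C^-1)%:E ->
     exists m : R, is_clipped_mean P C m /\ 0 < m /\
       (forall mu : R, 0 <= mu -> (G_clip P C mu = 0%E <-> (mu = 0 \/ mu = m))))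
  /\
  (P [set (0:R)] = (1 - C^-1)%:E ->
     (forall mu : R, 0 <= mu -> mu <= C^-1 * median_C P C -> G_clip P C mu = 0%E)
     /\ is_clipped_mean P C (C^-1 * median_C P C))
  /\
  (lte (1 - C^-1)%:E (P [set (0:R)]) ->
     (forall mu : R, 0 <= mu -> (G_clip P C mu = 0%E <-> mu = 0))
     /\ is_clipped_mean P C 0).
Proof.
move=> C1 sP.
have C0 : 0 < C by apply: lt_trans C1.
have CC : C * C^-1 = 1 by rewrite divff// gt_eqF.
have m0 : measurable [set (0:R)] by [].
have E0 : P [set (0:R)] = (pr P [set 0])%:E by rewrite (prE P m0).
have pg := pgt0E P sP.
have Gz : G_clip P C 0 = 0%E by rewrite (G0 C1 sP) ?g0.
split; [|split].
- rewrite E0 lte_fin => H.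
  have p1 : C^-1 < pgt P 0 by rewrite pg; lra.
  have [c [c0 gc]] := root_ex C1 p1.
  have up : forall mu, 0 <= mu -> G_clip P C mu = 0%E -> mu <= c.
    move=> mu mu0 /(G0 C1 sP _ mu0) gm; rewrite leNgt; apply/negP => cm.
    exact: (two_roots C1 p1 _ _ c0 cm gc gm).
  exists c; split; [split; [exact: ltW|split; [by apply/(G0 C1 sP _ (ltW c0))|exact: up]]|split => //].
  move=> mu mu0; split.
    move=> Gm; have := up _ mu0 Gm; move/(G0 C1 sP _ mu0): Gm => gm.
    rewrite le_eqVlt => /orP[/eqP ->|mc]; first by right.
    left; case: (ltP 0 mu) => m0'; last by apply/le_anti/andP.
    by exfalso; exact: (two_roots C1 p1 _ _ m0' mc gm gc).
  by case=> ->; [|apply/(G0 C1 sP _ (ltW c0))].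
- rewrite E0 => -[] Hp.
  have p2 : pgt P 0 = C^-1 by rewrite pg Hp; ring.
  have mE : median_C P C = sup (Emed R P C) by [].
  rewrite mE.
  have mg := m_ge0 C1 p2.
  have zb : forall mu, 0 <= mu -> mu <= C^-1 * sup (Emed R P C) -> G_clip P C mu = 0%E.
    move=> mu mu0 Hm; apply/(G0 C1 sP _ mu0); apply: (zero_below C1 p2 _ mu0).
    by move: Hm; rewrite -(ler_pM2l C0) mulrA CC mul1r.
  have Cm : C * (C^-1 * sup (Emed R P C)) = sup (Emed R P C) by rewrite mulrA CC mul1r.
  have cm0 : 0 <= C^-1 * sup (Emed R P C) by rewrite mulr_ge0// invr_ge0 ltW.
  split => //; split => //; split; first by apply: zb.
  move=> mu mu0 /(G0 C1 sP _ mu0) gm; rewrite leNgt; apply/negP => H'.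
  have : sup (Emed R P C) < C * mu by rewrite -Cm ltr_pM2l.
  by move/(neg_above C1 p2 _ mu0); rewrite gm ltxx.
- rewrite E0 lte_fin => H.
  have p3 : pgt P 0 < C^-1 by rewrite pg; lra.
  have iff : forall mu, 0 <= mu -> G_clip P C mu = 0%E <-> mu = 0.
    move=> mu mu0; split; last by move=> ->.
    move/(G0 C1 sP _ mu0) => gm; case: (ltP 0 mu) => m0'; last by apply/le_anti/andP.
    by have := case3 C1 p3 _ m0'; rewrite gm ltxx.
  split => //; split => //; split => // mu mu0 /(iff _ mu0) ->.
  exact: lexx.

Qed.
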